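(* Let $(X,d)$ be a metric vector space (with translation-invariant metric $d$) such that $\dim X<\infty$. Let $A_0\subseteq A_1\subseteq A_2\subseteq\cdots\subseteq X$ be a nested sequence of subsets of $X$ satisfying: (A1) there is a map $K:\mathbb{N}\to\mathbb{N}$ with $K(n)\ge n$ and $A_n+A_n\subseteq A_{K(n)}$ for all $n\in\mathbb{N}$; (A2) $\lambda A_n\subseteq A_n$ for all $n\in\mathbb{N}$ and all scalars $\lambda$; (A3) $\bigcup_{n\in\mathbb{N}}A_n$ is dense in $X$. Then there exists $N\in\mathbb{N}$ such that $A_N=X$.
   Context: For subsets $A,B$ of a vector space and a scalar $\lambda$, $A+B=\{a+b:a\in A,b\in B\}$ and $\lambda A=\{\lambda a:a\in A\}$. *)

(* Defs.v *)
From HB Require Import structures.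
From mathcomp Require Import all_boot all_order all_algebra.
From mathcomp Require Import boolp classical_sets reals.
Set Implicit Arguments. Unset Strict Implicit. Unset Printing Implicit Defensive.
Import Order.TTheory GRing.Theory Num.Theory.
Local Open Scope ring_scope.
Local Open Scope classical_set_scope.

Definition set_sum (V : zmodType) (A B : set V) : set V :=
  [set z | exists a, exists b, A a /\ B b /\ z = a + b].

Definition set_scale (R : nzRingType) (V : lmodType R) (l : R) (A : set V) : set V :=
  [set z | exists a, A a /\ z = l *: a].

Definition is_metric (R : realType) (X : Type) (d : X -> X -> R) : Prop :=
  [/\ (forall x y, 0 <= d x y),
      (forall x y, d x y = 0 <-> x = y),
      (forall x y, d x y = d y x) &
      (forall x y z, d x z <= d x y + d y z)].

(* A metric vector space over the reals: a real vector space X with a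
   translation-invariant metric d for which the vector operations are
   continuous (addition is automatically continuous for a translation
   invariant metric; we nevertheless state it for clarity). *)
Definition metric_vector_space (R : realType) (X : lmodType R)
    (d : X -> X -> R) : Prop :=
  [/\ is_metric d,
      (forall x y z, d (x + z) (y + z) = d x y),
      (forall x y (e : R), 0 < e -> exists2 r : R, 0 < r &
          forall x' y', d x x' < r -> d y y' < r -> d (x + y) (x' + y') < e) &
      (forall (l : R) x (e : R), 0 < e -> exists2 r : R, 0 < r &
          forall (l' : R) x', `|l - l'| < r -> d x x' < r ->
            d (l *: x) (l' *: x') < e)].

(* Main.v *)
Require Import Defs.
From HB Require Import structures.
From mathcomp Require Import all_boot all_order all_algebra.
From mathcomp Require Import boolp classical_sets reals.
From mathcomp Require Import topology normedtype derive.
From mathcomp Require Import lra zify.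
Import Order.TTheory GRing.Theory Num.Theory numFieldNormedType.Exports.
Local Open Scope ring_scope.
Local Open Scope classical_set_scope.

Lemma span_decomp (R : realType) (X : vectType R) (b w : X) (s : seq X) :
  w \in <<b :: s>>%VS -> exists c, exists2 w', w' \in <<s>>%VS & w = c *: b + w'.
Proof.
by rewrite span_cons => /memv_addP [u /vlineP [c ->] [w' Hw' ->]]; exists c, w'.
Qed.

Lemma closed_span (R : realType) (X : vectType R) (d : X -> X -> R) :
  metric_vector_space d -> forall (s : seq X) x, x \notin <<s>>%VS ->
  exists2 e, 0 < e & forall w, w \in <<s>>%VS -> e <= d x w.
Proof.
move=> [[Hpos Hzero Hsym Htri] Ht _ Hsc].
have dtr : forall u v, d u v = d (u - v) 0.
  by move=> u v; rewrite -(Ht u v (- v)) subrr.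
elim=> [|b s IH] x.
  rewrite span_nil memv0 => x0; exists (d x 0).
    rewrite lt_def Hpos andbT; apply/negP => /eqP /Hzero x0'.
    by rewrite x0' eqxx in x0.
  by move=> w; rewrite memv0 => /eqP ->.
have sub : forall y, y \in <<s>>%VS -> y \in <<b :: s>>%VS.
  by move=> y Hy; rewrite span_cons; apply: (subvP (addvSr _ _)).
case: (boolP (b \in <<s>>%VS)) => Hb Hx.
  have Hx' : x \notin <<s>>%VS by apply: contra Hx; exact: sub.
  have [e e0 He] := IH x Hx'; exists e => // w /span_decomp [c [w' Hw' ->]].
  by apply: He; rewrite memvD // memvZ.
have [eb eb0 Heb] := IH b Hb.
have [r r0 Hr] := Hsc 0 x eb eb0.
have big : forall c w, w \in <<s>>%VS -> r^-1 < `|c| -> r <= d x (c *: b + w).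
  move=> c w Hw Hc; rewrite leNgt; apply/negP => Hlt.
  have ri0 : 0 < r^-1 by rewrite invr_gt0.
  have cn0 : c != 0 by rewrite -normr_gt0; apply: lt_trans Hc.
  have Hc' : `|0 - c^-1| < r.
    rewrite sub0r normrN normrV ?unitfE //.
    rewrite invf_plt ?posrE ?normr_gt0 //.
  have := Hr _ _ Hc' Hlt.
  rewrite scale0r scalerDr scalerA mulVf // scale1r.
  have -> : d 0 (b + c^-1 *: w) = d b (- (c^-1 *: w)).
    by rewrite Hsym -(Ht b (- (c^-1 *: w)) (c^-1 *: w)) addNr.
  by apply/negP; rewrite -leNgt; apply: Heb; rewrite memvN memvZ.
pose g c := inf [set y | exists2 w, w \in <<s>>%VS & y = d (x - c *: b) w].
have gne : forall c, [set y | exists2 w, w \in <<s>>%VS & y = d (x - c *: b) w] !=set0.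
  by move=> c; exists (d (x - c *: b) 0); exists 0 => //; rewrite mem0v.
have gle : forall c w, w \in <<s>>%VS -> g c <= d (x - c *: b) w.
  move=> c w Hw; apply: ge_inf; last by exists w.
  by exists 0 => y [w' _ ->].
have gpos : forall c, 0 < g c.
  move=> c; have Hxc : x - c *: b \notin <<s>>%VS.
    apply: contra Hx => H; have -> : x = c *: b + (x - c *: b) by rewrite addrC subrK.
    by rewrite span_cons memv_add // memvZ // memv_line.
  have [e e0 He] := IH _ Hxc; apply: lt_le_trans e0 _.
  by apply: lb_le_inf => // y [w Hw ->]; apply: He.
have glip : forall c c', g c' <= d (c *: b) (c' *: b) + g c.
  move=> c c'; rewrite -lerBlDl; apply: lb_le_inf => // y [w Hw ->].
  rewrite lerBlDl; apply: le_trans (gle c' w Hw) _.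
  apply: le_trans (Htri _ (x - c *: b) _) _.
  have -> : d (x - c' *: b) (x - c *: b) = d (c *: b) (c' *: b).
    by rewrite dtr [d (c *: b) _]dtr opprB addrC addrA subrK.
  by [].
have gcont : continuous g.
  move=> c; apply/cvgrPdist_lt => eps eps0.
  have [rho rho0 Hrho] := Hsc c b eps eps0.
  apply/nbhs_normP; exists rho => // t /= Hct.
  have := Hrho t b Hct; rewrite (proj2 (Hzero b b) erefl) => /(_ rho0) H.
  have H1 := glip c t; have H2 := glip t c.
  rewrite Hsym in H2.
  rewrite ltr_distlC; apply/andP; split; lra.
have ri0 : 0 < r^-1 by rewrite invr_gt0.
have [c0 _ Hc0] := @EVT_min R g (- r^-1) r^-1 ltac:(lra) (continuous_subspaceT gcont).
exists (Num.min (g c0) r); first by rewrite lt_min gpos r0.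
move=> w /span_decomp [c [w' Hw' ->]].
case: (leP `|c| r^-1) => Hc.
  rewrite ge_min; apply/orP; left.
  apply: le_trans (Hc0 c _) _; first by rewrite in_itv /= -ler_norml.
  apply: le_trans (gle c w' Hw') _.
  by rewrite dtr [d x _]dtr opprD addrA.
by rewrite ge_min; apply/orP; right; apply: big.
Qed.

Theorem mainTheorem1 (R : realType) (X : vectType R) (d : X -> X -> R)
    (A : nat -> set X) :
  metric_vector_space d ->
  (forall n, A n `<=` A n.+1) ->
  (* (A1) *)
  (exists K : nat -> nat, forall n, (n <= K n)%N /\ set_sum (A n) (A n) `<=` A (K n)) ->
  (* (A2) *)
  (forall n (l : R), set_scale l (A n) `<=` A n) ->
  (* (A3) *)
  (forall x (e : R), 0 < e -> exists n, exists2 y, A n y & d x y < e) ->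
  exists N : nat, A N = [set: X].
Proof.
move=> Hd Hnest [K HK] Hscale Hden.
have mono : forall m n, (m <= n)%N -> A m `<=` A n.
  move=> m n /subnKC <-; elim: (n - m)%N => [|k IH]; first by rewrite addn0.
  by rewrite addnS; apply: subset_trans IH (Hnest _).
pose good (s : seq X) := forall b, b \in s -> exists n, A n b.
have extend : forall s, good s -> ~ (forall a n, A n a -> a \in <<s>>%VS) ->
    exists a, good (a :: s) /\ (\dim <<s>> < \dim <<a :: s>>)%N.
  move=> s gs H.
  have [a [n [Ha Hna]]] : exists a n, A n a /\ a \notin <<s>>%VS.
    apply: contrapT => HH; apply: H => a n Ha.
    case: (boolP (a \in <<s>>%VS)) => // Hn; exfalso; apply: HH; by exists a, n.
  exists a; split.
    move=> b; rewrite inE => /orP [/eqP -> |]; [by exists n | exact: gs].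
  rewrite ltnNge; apply/negP => Hle.
  have sub : (<<s>> <= <<a :: s>>)%VS by rewrite span_cons addvSr.
  have /eqP Heq : <<s>>%VS == <<a :: s>>%VS by rewrite eqEdim sub Hle.
  by move: Hna; rewrite Heq span_cons (subvP (addvSl _ _)) // memv_line.
have maxspan : forall j s, good s -> (\dim (fullv : {vspace X}) - \dim <<s>> <= j)%N ->
    exists s', good s' /\ (forall a n, A n a -> a \in <<s'>>%VS).
  elim=> [|j IH] s gs Hj;
    (case: (pselect (forall a n, A n a -> a \in <<s>>%VS)) => H; first by exists s);
    have [a [ga Hlt]] := extend s gs H;
    have Hf : (\dim <<a :: s>> <= \dim (fullv : {vspace X}))%N by apply: dimvS; apply: subvf.
    by exfalso; lia.
  by apply: (IH (a :: s) ga); lia.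
have [s [gs Hs]] := maxspan _ [::] (fun b (H : b \in [::]) => False_ind _ (notF H)) (leqnn _).
have Hall : forall x, x \in <<s>>%VS.
  move=> x; case: (boolP (x \in <<s>>%VS)) => // Hx; exfalso.
  have [e e0 He] := @closed_span R X d Hd s x Hx.
  have [n [y Hy Hxy]] := Hden x e e0.
  by move: (He y (Hs y n Hy)); rewrite leNgt Hxy.
have [m Hm] : exists m, forall b, b \in s -> A m b.
  elim: s gs {Hs Hall} => [|b s IH] gs; first by exists 0%N.
  have [|m Hm] := IH; first by move=> c Hc; apply: gs; rewrite inE Hc orbT.
  have [n Hn] := gs b (mem_head _ _).
  exists (maxn m n) => c; rewrite inE => /orP [/eqP -> | Hc].
    by apply: (mono n); rewrite ?leq_maxr.
  by apply: (mono m); rewrite ?leq_maxl //; apply: Hm.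
have [n0 H0] : exists n, A n 0.
  have [n [y Hy _]] := Hden 0 1 ltr01.
  exists n; apply: (Hscale n 0); exists y; by rewrite scale0r.
have Q : forall t : seq X, (forall b, b \in t -> A m b) ->
    exists N, forall x, x \in <<t>>%VS -> A N x.
  elim=> [|b t IH] Ht.
    by exists n0 => x; rewrite span_nil memv0 => /eqP ->.
  have [|N HN] := IH; first by move=> c Hc; apply: Ht; rewrite inE Hc orbT.
  exists (K (maxn m N)) => x /span_decomp [c [w Hw ->]].
  apply: (proj2 (HK (maxn m N))); exists (c *: b), w; split; [|split] => //.
    apply: (mono m); first exact: leq_maxl.
    by apply: (Hscale m c); exists b; split => //; apply: Ht; exact: mem_head.
  by apply: (mono N); [exact: leq_maxr | exact: HN].
have [N HN] := Q s Hm.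
by exists N; apply/seteqP; split => // x _; apply: HN.
Qed.
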